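(* Let $P=(X,D,C)$ be a St-CSP and suppose $(C,\emptyset)\rightsquigarrow\cdots\rightsquigarrow(C_0,C_1)$ by applications of rules (R1)–(R3), introducing the set $Y$ of auxiliary variables. Let $P'$ be the St-CSP with variables $X\cup Y$, the same domains as $P$ on $X$, domain $\mathbb{Z}^\omega$ (all integer streams) for each variable in $Y$, and constraint set $C_0\cup C_1$. Then an assignment $A$ of the variables $X$ is a solution of $P$ if and only if $A$ extends to a solution of $P'$; that is, $sol(P)$ equals the projection of $sol(P')$ onto $X$.
   Context: Streams are functions $\mathbb{N}_0\to\mathbb{Z}$; for a finite alphabet $\Sigma$, $\Sigma^\omega$ is the set of streams with values in $\Sigma$. A St-CSP is a triple $(X,D,C)$ with a finite set $X$ of stream variables, domains $D(x)=\Sigma(x)^\omega$, and a finite set $C$ of stream constraints; $sol(P)$ is the set of assignments of streams in the domains to the variables satisfying all constraints. Stream expressions are built from stream variables and constant streams using pointwise operators (arithmetic, relational operators returning $0/1$ streams, Boolean and/or/not, if-then-else, each applied pointwise via fixed total functions on integers) and the temporal operators $\mathtt{first}$ ($(\mathtt{first}\,a)(i)=a(0)$), $\mathtt{next}$ ($(\mathtt{next}\,a)(i)=a(i+1)$) and $\mathtt{fby}$ ($(a\ \mathtt{fby}\ b)(0)=a(0)$, $(a\ \mathtt{fby}\ b)(i)=b(i-1)$ for $i\ge1$). A stream constraint is one of: $e_1\,R\,e_2$ with $R\in\{<,\le,==,\ge,>,\ne\}$ (satisfied iff $R$ holds at every time point), $e_1\ \mathtt{->}\ e_2$ (satisfied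 iff for all $i$, $e_1(i)\ne0$ implies $e_2(i)\ne0$), or $e_1\ \mathtt{until}\ e_2$ (satisfied iff there is $i\ge0$ with $e_1(j)\ne0$ for all $j<i$ and $e_2(i)\ne0$); $\mathtt{until}$ occurs only as the outermost constructor. A constraint context $c[\_]$ is a constraint with one expression occurrence replaced by a placeholder; $c[e]$ denotes substitution. The rewriting rules on pairs $(C_0,C_1)$ of constraint sets are (all $x_k$ fresh variables): (R1) $(C_0\cup\{c[\mathtt{next}\ e]\},C_1)\rightsquigarrow(C_0\cup\{c[x_1],\ x_2==e\},\ C_1\cup\{x_1==\mathtt{next}\ x_2\})$; (R2) $(C_0\cup\{c[e_1\ \mathtt{fby}\ e_2]\},C_1)\rightsquigarrow(C_0\cup\{c[x_1],\ x_2==e_1,\ x_3==e_2\},\ C_1\cup\{\mathtt{first}\ x_1==\mathtt{first}\ x_2,\ x_3==\mathtt{next}\ x_1\})$; (R3) $(C_0\cup\{e_1\ \mathtt{until}\ e_2\},C_1)\rightsquigarrow(C_0\cup\{x_1==e_1,\ x_2==e_2\},\ C_1\cup\{x_1\ \mathtt{until}\ x_2\})$. *)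

(* Defs.v *)
From Stdlib Require Import ZArith List Relations.
Import ListNotations.
Open Scope Z_scope.

Definition stream := nat -> Z.

Definition var := nat.

(** Pointwise operators are applied via fixed total
    functions on integers (unary, binary); if-then-else is pointwise
    (condition nonzero = true). *)
Inductive expr : Type :=
| EVar   : var -> expr
| EConst : Z -> expr
| EUn    : (Z -> Z) -> expr -> expr
| EBin   : (Z -> Z -> Z) -> expr -> expr -> expr
| EIte   : expr -> expr -> expr -> expr
| EFirst : expr -> expr
| ENext  : expr -> expr
| EFby   : expr -> expr -> expr.

Inductive relop : Type := RLt | RLe | REq | RGe | RGt | RNe.

Definition rel_holds (R : relop) (a b : Z) : Prop :=
  match R with
  | RLt => a < b | RLe => a <= b | REq => a = b
  | RGe => a >= b | RGt => a > b | RNe => a <> b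
  end.

(** Stream constraints ([until] is only outermost, by construction). *)
Inductive constr : Type :=
| CRel   : relop -> expr -> expr -> constr
| CImp   : expr -> expr -> constr
| CUntil : expr -> expr -> constr.

(** Assignments (total; only values on the relevant variables matter). *)
Definition assignment := var -> stream.

Fixpoint eval (A : assignment) (e : expr) : stream :=
  match e with
  | EVar x => A x
  | EConst c => fun _ => c
  | EUn f e1 => fun i => f (eval A e1 i)
  | EBin f e1 e2 => fun i => f (eval A e1 i) (eval A e2 i)
  | EIte e1 e2 e3 => fun i => if Z.eqb (eval A e1 i) 0 then eval A e3 i else eval A e2 i
  | EFirst e1 => fun _ => eval A e1 0%nat
  | ENext e1 => fun i => eval A e1 (S i)
  | EFby e1 e2 => fun i => match i with O => eval A e1 0%nat | S j => eval A e2 j end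
  end.

Definition sat (A : assignment) (c : constr) : Prop :=
  match c with
  | CRel R e1 e2 => forall i, rel_holds R (eval A e1 i) (eval A e2 i)
  | CImp e1 e2 => forall i, eval A e1 i <> 0 -> eval A e2 i <> 0
  | CUntil e1 e2 => exists i, (forall j, (j < i)%nat -> eval A e1 j <> 0) /\ eval A e2 i <> 0
  end.

Fixpoint vars_expr (e : expr) : list var :=
  match e with
  | EVar x => [x]
  | EConst _ => []
  | EUn _ e1 | EFirst e1 | ENext e1 => vars_expr e1
  | EBin _ e1 e2 | EFby e1 e2 => vars_expr e1 ++ vars_expr e2
  | EIte e1 e2 e3 => vars_expr e1 ++ vars_expr e2 ++ vars_expr e3
  end.

Definition vars_constr (c : constr) : list var :=
  match c with
  | CRel _ e1 e2 | CImp e1 e2 | CUntil e1 e2 => vars_expr e1 ++ vars_expr e2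
  end.

Definition vars_constrs (C : list constr) : list var := flat_map vars_constr C.

Inductive ectx : Type :=
| KHole  : ectx
| KUn    : (Z -> Z) -> ectx -> ectx
| KBinL  : (Z -> Z -> Z) -> ectx -> expr -> ectx
| KBinR  : (Z -> Z -> Z) -> expr -> ectx -> ectx
| KIte1  : ectx -> expr -> expr -> ectx
| KIte2  : expr -> ectx -> expr -> ectx
| KIte3  : expr -> expr -> ectx -> ectx
| KFirst : ectx -> ectx
| KNext  : ectx -> ectx
| KFbyL  : ectx -> expr -> ectx
| KFbyR  : expr -> ectx -> ectx.

Fixpoint eplug (k : ectx) (e : expr) : expr :=
  match k with
  | KHole => e
  | KUn f k1 => EUn f (eplug k1 e)
  | KBinL f k1 e2 => EBin f (eplug k1 e) e2
  | KBinR f e1 k2 => EBin f e1 (eplug k2 e)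
  | KIte1 k1 e2 e3 => EIte (eplug k1 e) e2 e3
  | KIte2 e1 k2 e3 => EIte e1 (eplug k2 e) e3
  | KIte3 e1 e2 k3 => EIte e1 e2 (eplug k3 e)
  | KFirst k1 => EFirst (eplug k1 e)
  | KNext k1 => ENext (eplug k1 e)
  | KFbyL k1 e2 => EFby (eplug k1 e) e2
  | KFbyR e1 k2 => EFby e1 (eplug k2 e)
  end.

Inductive cctx : Type :=
| CKRelL   : relop -> ectx -> expr -> cctx
| CKRelR   : relop -> expr -> ectx -> cctx
| CKImpL   : ectx -> expr -> cctx
| CKImpR   : expr -> ectx -> cctx
| CKUntilL : ectx -> expr -> cctx
| CKUntilR : expr -> ectx -> cctx.

Definition cplug (c : cctx) (e : expr) : constr :=
  match c with
  | CKRelL R k e2 => CRel R (eplug k e) e2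
  | CKRelR R e1 k => CRel R e1 (eplug k e)
  | CKImpL k e2 => CImp (eplug k e) e2
  | CKImpR e1 k => CImp e1 (eplug k e)
  | CKUntilL k e2 => CUntil (eplug k e) e2
  | CKUntilR e1 k => CUntil e1 (eplug k e)
  end.

Definition ceq (e1 e2 : expr) : constr := CRel REq e1 e2.

Record rstate := RS { st_C0 : list constr; st_C1 : list constr; st_Y : list var }.

Definition fresh (X : list var) (s : rstate) (x : var) : Prop :=
  ~ In x X /\ ~ In x (st_Y s) /\
  ~ In x (vars_constrs (st_C0 s)) /\ ~ In x (vars_constrs (st_C1 s)).

(** One rewriting step (R1)-(R3); "C0 ∪ {c}" is modelled by picking one
    occurrence of c in the list C0 (= l1 ++ c :: l2) and removing it. *)
Inductive rstep (X : list var) : rstate -> rstate -> Prop :=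
| R1 : forall l1 l2 C1 Y (c : cctx) (e : expr) (x1 x2 : var),
    let s := RS (l1 ++ cplug c (ENext e) :: l2) C1 Y in
    fresh X s x1 -> fresh X s x2 -> x1 <> x2 ->
    rstep X s
      (RS (cplug c (EVar x1) :: ceq (EVar x2) e :: l1 ++ l2)
          (ceq (EVar x1) (ENext (EVar x2)) :: C1)
          (x1 :: x2 :: Y))
| R2 : forall l1 l2 C1 Y (c : cctx) (e1 e2 : expr) (x1 x2 x3 : var),
    let s := RS (l1 ++ cplug c (EFby e1 e2) :: l2) C1 Y in
    fresh X s x1 -> fresh X s x2 -> fresh X s x3 ->
    x1 <> x2 -> x1 <> x3 -> x2 <> x3 ->
    rstep X s
      (RS (cplug c (EVar x1) :: ceq (EVar x2) e1 :: ceq (EVar x3) e2 :: l1 ++ l2)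
          (ceq (EFirst (EVar x1)) (EFirst (EVar x2))
             :: ceq (EVar x3) (ENext (EVar x1)) :: C1)
          (x1 :: x2 :: x3 :: Y))
| R3 : forall l1 l2 C1 Y (e1 e2 : expr) (x1 x2 : var),
    let s := RS (l1 ++ CUntil e1 e2 :: l2) C1 Y in
    fresh X s x1 -> fresh X s x2 -> x1 <> x2 ->
    rstep X s
      (RS (ceq (EVar x1) e1 :: ceq (EVar x2) e2 :: l1 ++ l2)
          (CUntil (EVar x1) (EVar x2) :: C1)
          (x1 :: x2 :: Y)).

Definition rsteps (X : list var) : rstate -> rstate -> Prop :=
  clos_refl_trans rstate (rstep X).

(** A St-CSP (X, D, C): variables X, domain Sigma(x)^omega given by a finite
    alphabet D x (a list of integers), and constraints C over X. *)
Record stcsp := StCSP {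
  csp_X : list var;
  csp_D : var -> list Z;
  csp_C : list constr }.

Definition well_formed (P : stcsp) : Prop :=
  forall x, In x (vars_constrs (csp_C P)) -> In x (csp_X P).

Definition in_domain (alphabet : list Z) (s : stream) : Prop :=
  forall i, In (s i) alphabet.

Definition is_sol (P : stcsp) (A : assignment) : Prop :=
  (forall x, In x (csp_X P) -> in_domain (csp_D P x) (A x)) /\
  (forall c, In c (csp_C P) -> sat A c).

(** P' : variables X ∪ Y, domains of P on X, Z^omega on Y (i.e. no domain
    restriction), constraints C0 ∪ C1. *)
Definition is_sol_P' (P : stcsp) (Y : list var) (C : list constr) (A : assignment) : Prop :=
  (forall x, In x (csp_X P) -> in_domain (csp_D P x) (A x)) /\
  (forall c, In c C -> sat A c).

(* Main.v *)
Require Import Defs.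
From Stdlib Require Import ZArith List Relations Lia.
Import ListNotations.
Open Scope Z_scope.

Definition sat_all (A : assignment) (L : list constr) : Prop :=
  forall c, In c L -> sat A c.

Lemma eval_agree A B e :
  (forall x, In x (vars_expr e) -> A x = B x) -> forall i, eval A e i = eval B e i.
Proof.
  induction e; simpl; intros H i; try reflexivity.
  - rewrite H; auto.
  - rewrite IHe; auto.
  - rewrite IHe1, IHe2; auto; intros; apply H; apply in_or_app; auto.
  - rewrite IHe1, IHe2, IHe3; auto; intros; apply H; repeat (apply in_or_app; auto; right).
  - rewrite IHe; auto.
  - rewrite IHe; auto.
  - destruct i; [rewrite IHe1|rewrite IHe2]; auto; intros; apply H; apply in_or_app; auto.
Qed.

Lemma sat_agree A B c :
  (forall x, In x (vars_constr c) -> A x = B x) -> sat A c -> sat B c.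
Proof.
  destruct c; simpl; intros H S.
  - intro i. rewrite <- !(eval_agree A B); auto;
    intros; apply H; apply in_or_app; auto.
  - intro i. rewrite <- !(eval_agree A B); auto;
    intros; apply H; apply in_or_app; auto.
  - destruct S as [i [H1 H2]]. exists i. split.
    + intros j Hj. rewrite <- (eval_agree A B); auto. intros; apply H; apply in_or_app; auto.
    + rewrite <- (eval_agree A B); auto. intros; apply H; apply in_or_app; auto.
Qed.

Lemma vars_in L c x : In c L -> In x (vars_constr c) -> In x (vars_constrs L).
Proof. intros; unfold vars_constrs; apply in_flat_map; eauto. Qed.

Lemma eplug_ext A k e e' :
  (forall i, eval A e i = eval A e' i) -> forall i, eval A (eplug k e) i = eval A (eplug k e') i.
Proof.
  intros H; induction k; simpl; intros i; auto;
  try (rewrite IHk; auto); try destruct i; auto.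
Qed.

Lemma cplug_ext A c e e' :
  (forall i, eval A e i = eval A e' i) -> sat A (cplug c e) -> sat A (cplug c e').
Proof.
  intros H; destruct c as [r k e2|r e1 k|k e2|e1 k|k e2|e1 k]; simpl; intros S;
  pose proof (eplug_ext A k e e' H) as Hk.
  - intro i; rewrite <- Hk; auto.
  - intro i; rewrite <- Hk; auto.
  - intro i; rewrite <- Hk; auto.
  - intro i; rewrite <- Hk; auto.
  - destruct S as [i [H1 H2]]; exists i; split; auto.
    intros j Hj; rewrite <- Hk; auto.
  - destruct S as [i [H1 H2]]; exists i; split; auto.
    rewrite <- Hk; auto.
Qed.

Lemma vars_eplug k e x : In x (vars_expr e) -> In x (vars_expr (eplug k e)).
Proof.
  induction k; simpl; intros; auto; repeat (apply in_or_app; auto; right).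
  all: try (apply in_or_app; auto).
  all: try (apply in_or_app; left; auto).
  all: try (right; apply in_or_app; auto).
Qed.

Lemma vars_cplug c e x : In x (vars_expr e) -> In x (vars_constr (cplug c e)).
Proof.
  destruct c; simpl; intros; apply in_or_app;
  first [left; apply vars_eplug; auto | right; apply vars_eplug; auto].
Qed.

Definition upd (B : assignment) (x : var) (s : stream) : assignment :=
  fun y => if Nat.eqb y x then s else B y.

Lemma upd_eq B x s : upd B x s x = s.
Proof. unfold upd; rewrite Nat.eqb_refl; auto. Qed.
Lemma upd_neq B x s y : y <> x -> upd B x s y = B y.
Proof. unfold upd; intros; destruct (Nat.eqb_spec y x); congruence. Qed.

Ltac grab := match goal with HS : sat_all _ _ |- _ => apply HS; simpl; rewrite ?in_app_iff; simpl; tauto end.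

Lemma sound_step X s s' : rstep X s s' ->
  forall B, sat_all B (st_C0 s' ++ st_C1 s') -> sat_all B (st_C0 s ++ st_C1 s).
Proof.
  destruct 1; simpl; intros B HS cc Hc.
  all: assert (HI : forall d, (In d l1 \/ In d l2 \/ In d C1) -> sat B d) by
    (intros d Hd; apply HS; simpl; rewrite !in_app_iff; simpl; rewrite ?in_app_iff; tauto).
  all: rewrite !in_app_iff in Hc; simpl in Hc.
  all: destruct Hc as [[Hc|[Hc|Hc]]|Hc]; [apply HI; auto| subst cc | apply HI; auto | apply HI; auto].
  - assert (Hx1 : sat B (cplug c (EVar x1))) by grab.
    assert (Hx2 : sat B (ceq (EVar x2) e)) by grab.
    assert (Hx3 : sat B (ceq (EVar x1) (ENext (EVar x2)))) by grab.
    simpl in Hx2, Hx3.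
    eapply cplug_ext; [|exact Hx1]. intro i; simpl. rewrite Hx3. simpl. auto.
  - assert (Hx1 : sat B (cplug c (EVar x1))) by grab.
    assert (Hx2 : sat B (ceq (EVar x2) e1)) by grab.
    assert (Hx3 : sat B (ceq (EVar x3) e2)) by grab.
    assert (Hx4 : sat B (ceq (EFirst (EVar x1)) (EFirst (EVar x2)))) by grab.
    assert (Hx5 : sat B (ceq (EVar x3) (ENext (EVar x1)))) by grab.
    simpl in Hx2, Hx3, Hx4, Hx5.
    eapply cplug_ext; [|exact Hx1]. intro i; simpl. destruct i.
    + rewrite (Hx4 0%nat), Hx2; auto.
    + rewrite <- Hx5, Hx3; auto.
  - assert (Hx2 : sat B (ceq (EVar x1) e1)) by grab.
    assert (Hx3 : sat B (ceq (EVar x2) e2)) by grab.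
    assert (Hx4 : sat B (CUntil (EVar x1) (EVar x2))) by grab.
    simpl in Hx2, Hx3, Hx4. destruct Hx4 as [i [Ha Hb]]. exists i. split.
    + intros j Hj. rewrite <- Hx2; auto.
    + rewrite <- Hx3; auto.
Qed.

Lemma agree_list A B L :
  (forall x, In x (vars_constrs L) -> A x = B x) -> sat_all A L -> sat_all B L.
Proof.
  intros H S c Hc. apply (sat_agree A B); auto. intros x Hx. apply H. eapply vars_in; eauto.
Qed.

Lemma complete_step X s s' : rstep X s s' ->
  forall B, sat_all B (st_C0 s ++ st_C1 s) ->
  exists B', (forall x, In x X -> B' x = B x) /\ sat_all B' (st_C0 s' ++ st_C1 s').
Proof.
  destruct 1; simpl; intros B HS;
  unfold fresh in *; simpl in *.
  - destruct H as [F1 [_ [F2 F3]]]. destruct H0 as [G1 [_ [G2 G3]]].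
    set (B' := upd (upd B x1 (fun i => eval B e (S i))) x2 (eval B e)).
    assert (Hag : forall x, x <> x1 -> x <> x2 -> B' x = B x).
    { intros; unfold B'; rewrite !upd_neq; auto. }
    assert (Hold : sat_all B' (l1 ++ cplug c (ENext e) :: l2 ++ C1)).
    { apply (agree_list B); [|intros d Hd; apply HS; rewrite !in_app_iff in *; simpl in *; rewrite ?in_app_iff in *; tauto].
      intros x Hx. symmetry. apply Hag; intro; subst x; unfold vars_constrs in Hx;
      rewrite flat_map_app in Hx; simpl in Hx; rewrite !in_app_iff in Hx;
      unfold vars_constrs in *; rewrite ?flat_map_app in *; simpl in *; rewrite ?in_app_iff in *; tauto. }
    assert (Hev : forall i, eval B' e i = eval B e i).
    { intro i. symmetry. apply eval_agree. intros x Hx. symmetry. apply Hag; intro; subst x.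
      - apply F2. eapply vars_in. apply in_or_app; right; left; reflexivity.
        apply vars_cplug. exact Hx.
      - apply G2. eapply vars_in. apply in_or_app; right; left; reflexivity.
        apply vars_cplug. exact Hx. }
    assert (B'1 : B' x1 = fun i => eval B e (S i)).
    { unfold B'; rewrite upd_neq; auto; apply upd_eq. }
    assert (B'2 : B' x2 = eval B e) by (unfold B'; apply upd_eq).
    exists B'. split.
    + intros x Hx; apply Hag; intro; subst; tauto.
    + intros d Hd. simpl in Hd. rewrite !in_app_iff in Hd; simpl in Hd.
      destruct Hd as [Hd|[Hd|[[Hd|Hd]|[Hd|Hd]]]]; try subst d;
        try (apply Hold; rewrite !in_app_iff; simpl; rewrite ?in_app_iff; tauto).
      * assert (Hc : sat B' (cplug c (ENext e))) by (apply Hold; rewrite !in_app_iff; simpl; tauto).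
        eapply cplug_ext; [|exact Hc]. intro i; simpl. rewrite B'1, Hev. reflexivity.
      * simpl. intro i. rewrite B'2, Hev. reflexivity.
      * simpl. intro i. rewrite B'2, B'1. reflexivity.
  - destruct H as [F1 [_ [F2 F3]]]. destruct H0 as [G1 [_ [G2 G3]]].
    destruct H1 as [K1 [_ [K2 K3]]].
    set (B' := upd (upd (upd B x1 (eval B (EFby e1 e2))) x2 (eval B e1)) x3 (eval B e2)).
    assert (Hag : forall x, x <> x1 -> x <> x2 -> x <> x3 -> B' x = B x).
    { intros; unfold B'; rewrite !upd_neq; auto. }
    assert (Hold : sat_all B' (l1 ++ cplug c (EFby e1 e2) :: l2 ++ C1)).
    { apply (agree_list B); [|intros d Hd; apply HS; rewrite !in_app_iff in *; simpl in *; rewrite ?in_app_iff in *; tauto].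
      intros x Hx. symmetry. apply Hag; intro; subst x; unfold vars_constrs in Hx;
      rewrite flat_map_app in Hx; simpl in Hx; rewrite !in_app_iff in Hx;
      unfold vars_constrs in *; rewrite ?flat_map_app in *; simpl in *; rewrite ?in_app_iff in *; tauto. }
    assert (Hin : forall x, In x (vars_expr e1) \/ In x (vars_expr e2) ->
               In x (vars_constrs (l1 ++ cplug c (EFby e1 e2) :: l2))).
    { intros x Hx. eapply vars_in. apply in_or_app; right; left; reflexivity.
      apply vars_cplug. simpl. apply in_or_app. exact Hx. }
    assert (Hev1 : forall i, eval B' e1 i = eval B e1 i).
    { intro i. symmetry. apply eval_agree. intros x Hx. symmetry.
      pose proof (Hin x (or_introl Hx)). apply Hag; intro; subst x; tauto. }
    assert (Hev2 : forall i, eval B' e2 i = eval B e2 i).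
    { intro i. symmetry. apply eval_agree. intros x Hx. symmetry.
      pose proof (Hin x (or_intror Hx)). apply Hag; intro; subst x; tauto. }
    assert (B'1 : B' x1 = eval B (EFby e1 e2)).
    { unfold B'; rewrite upd_neq, upd_neq; auto; apply upd_eq. }
    assert (B'2 : B' x2 = eval B e1) by (unfold B'; rewrite upd_neq; auto; apply upd_eq).
    assert (B'3 : B' x3 = eval B e2) by (unfold B'; apply upd_eq).
    exists B'. split.
    + intros x Hx; apply Hag; intro; subst; tauto.
    + intros d Hd. simpl in Hd. rewrite !in_app_iff in Hd; simpl in Hd.
      destruct Hd as [Hd|[Hd|[Hd|[[Hd|Hd]|[Hd|[Hd|Hd]]]]]]; try subst d;
        try (apply Hold; rewrite !in_app_iff; simpl; rewrite ?in_app_iff; tauto).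
      * assert (Hc : sat B' (cplug c (EFby e1 e2))) by (apply Hold; rewrite !in_app_iff; simpl; tauto).
        eapply cplug_ext; [|exact Hc]. intro i; simpl. rewrite B'1. simpl.
        destruct i; rewrite ?Hev1, ?Hev2; reflexivity.
      * simpl. intro i. rewrite B'2, Hev1. reflexivity.
      * simpl. intro i. rewrite B'3, Hev2. reflexivity.
      * simpl. intro i. rewrite B'2, B'1. reflexivity.
      * simpl. intro i. rewrite B'3, B'1. reflexivity.
  - destruct H as [F1 [_ [F2 F3]]]. destruct H0 as [G1 [_ [G2 G3]]].
    set (B' := upd (upd B x1 (eval B e1)) x2 (eval B e2)).
    assert (Hag : forall x, x <> x1 -> x <> x2 -> B' x = B x).
    { intros; unfold B'; rewrite !upd_neq; auto. }
    assert (Hold : sat_all B' (l1 ++ CUntil e1 e2 :: l2 ++ C1)).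
    { apply (agree_list B); [|intros d Hd; apply HS; rewrite !in_app_iff in *; simpl in *; rewrite ?in_app_iff in *; tauto].
      intros x Hx. symmetry. apply Hag; intro; subst x; unfold vars_constrs in Hx;
      rewrite flat_map_app in Hx; simpl in Hx; rewrite !in_app_iff in Hx;
      unfold vars_constrs in *; rewrite ?flat_map_app in *; simpl in *; rewrite ?in_app_iff in *; tauto. }
    assert (Hin : forall x, In x (vars_expr e1) \/ In x (vars_expr e2) ->
               In x (vars_constrs (l1 ++ CUntil e1 e2 :: l2))).
    { intros x Hx. eapply vars_in. apply in_or_app; right; left; reflexivity.
      simpl. apply in_or_app. exact Hx. }
    assert (Hev1 : forall i, eval B' e1 i = eval B e1 i).
    { intro i. symmetry. apply eval_agree. intros x Hx. symmetry.
      pose proof (Hin x (or_introl Hx)). apply Hag; intro; subst x; tauto. }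
    assert (Hev2 : forall i, eval B' e2 i = eval B e2 i).
    { intro i. symmetry. apply eval_agree. intros x Hx. symmetry.
      pose proof (Hin x (or_intror Hx)). apply Hag; intro; subst x; tauto. }
    assert (B'1 : B' x1 = eval B e1).
    { unfold B'; rewrite upd_neq; auto; apply upd_eq. }
    assert (B'2 : B' x2 = eval B e2) by (unfold B'; apply upd_eq).
    exists B'. split.
    + intros x Hx; apply Hag; intro; subst; tauto.
    + intros d Hd. simpl in Hd. rewrite !in_app_iff in Hd; simpl in Hd.
      destruct Hd as [Hd|[Hd|[[Hd|Hd]|[Hd|Hd]]]]; try subst d;
        try (apply Hold; rewrite !in_app_iff; simpl; rewrite ?in_app_iff; tauto).
      * simpl. intro i. rewrite B'1, Hev1. reflexivity.
      * simpl. intro i. rewrite B'2, Hev2. reflexivity.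
      * assert (Hc : sat B' (CUntil e1 e2)) by (apply Hold; rewrite !in_app_iff; simpl; tauto).
        simpl in Hc |- *. destruct Hc as [i [Ha Hb]]. exists i. split.
        -- intros j Hj. rewrite B'1, <- Hev1. auto.
        -- rewrite B'2, <- Hev2. auto.
Qed.

Theorem proposition3 (P : stcsp) (C0 C1 : list constr) (Y : list var) :
  well_formed P ->
  rsteps (csp_X P) (RS (csp_C P) nil nil) (RS C0 C1 Y) ->
  forall A : assignment,
    is_sol P A <->
    exists A' : assignment,
      (forall x, In x (csp_X P) -> A' x = A x) /\
      is_sol_P' P Y (C0 ++ C1) A'.
Proof.
  intros WF HR.
  assert (Hs : forall s s', rsteps (csp_X P) s s' ->
     (forall B, sat_all B (st_C0 s' ++ st_C1 s') -> sat_all B (st_C0 s ++ st_C1 s)) /\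
     (forall B, sat_all B (st_C0 s ++ st_C1 s) ->
        exists B', (forall x, In x (csp_X P) -> B' x = B x) /\ sat_all B' (st_C0 s' ++ st_C1 s'))).
  { intros s s' R. induction R as [s s' R| s | s s' s'' R1 [IH1 IH2] R2 [IH3 IH4]].
    - split; [eapply sound_step; eauto| eapply complete_step; eauto].
    - split; auto. intros B HB; exists B; split; auto.
    - split; auto. intros B HB. destruct (IH2 B HB) as [B1 [E1 S1]].
      destruct (IH4 B1 S1) as [B2 [E2 S2]]. exists B2; split; auto.
      intros x Hx; rewrite E2, E1; auto. }
  destruct (Hs _ _ HR) as [So Co]. simpl in So, Co.
  intros A. split.
  - intros [HD HC]. destruct (Co A) as [B' [E S]].
    { intros c Hc. apply HC. rewrite app_nil_r in Hc. exact Hc. }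
    exists B'. split; auto. split; auto.
    intros x Hx. rewrite E; auto.
  - intros [A' [E [HD HC]]]. split.
    + intros x Hx. rewrite <- E; auto.
    + intros c Hc. assert (S := So A' HC c ltac:(rewrite app_nil_r; exact Hc)).
      apply (sat_agree A' A); auto. intros x Hx. apply E. apply WF. eapply vars_in; eauto.
Qed.
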